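(* Let $\mathcal{T}=(V,E,L)$ be a trellis of length $n$ with labels in $\mathbb{Q}[\Sigma]$, and let $v\neq v'$ be two vertices lying in the same layer $V_j$ with $1\le j\le n-1$ that are mergeable, i.e. $$\mathcal{P}(v)\mathcal{F}(v)+\mathcal{P}(v')\mathcal{F}(v')=\mathcal{P}(v)\mathcal{F}(v')+\mathcal{P}(v')\mathcal{F}(v)\quad\text{in }\mathbb{Q}[\Sigma^+].$$ Let $\mathcal{T}^*=(V^*,E^*,L^* )$ be the trellis obtained by merging $v$ and $v'$. Then $\mathcal{C}(\mathcal{T}^* )=\mathcal{C}(\mathcal{T})$.
   Context: $\Sigma$ is a finite alphabet, $\Sigma^+$ is the semigroup of nonempty finite strings over $\Sigma$ under concatenation, and $\mathbb{Q}[\Sigma^+]$ is its semigroup algebra over $\mathbb{Q}$: finite formal sums $\sum a_{\boldsymbol\sigma}\boldsymbol\sigma$ with $a_{\boldsymbol\sigma}\in\mathbb{Q}$, with multiplication given by concatenation extended bilinearly. $\mathbb{Q}[\Sigma]\subseteq\mathbb{Q}[\Sigma^+]$ denotes the formal $\mathbb{Q}$-linear combinations of single symbols. A trellis $\mathcal{T}=(V,E,L)$ of length $n$ is a directed graph whose vertex set is partitioned as $V=V_0\cup\dots\cup V_n$, with $V_0=\{\mathrm{root}\}$, $V_n=\{\mathrm{toor}\}$, every edge going from some $V_{j-1}$ to $V_j$ ($j\in[n]$), together with an edge-labelling $L:E\to\mathbb{Q}[\Sigma]$; extend $L$ to $V\times V$ by $L(u,w)=0$ if $(u,w)\notin E$.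 The label of a path is the product (in $\mathbb{Q}[\Sigma^+]$) of its edge labels in order. $\mathcal{C}(\mathcal{T})\in\mathbb{Q}[\Sigma^+]$ is the sum of the labels of all root-to-toor paths (this encodes the multiset of path label strings). For a vertex $w$, the past $\mathcal{P}(w)$ is the sum of labels of all paths from the root to $w$ and the future $\mathcal{F}(w)$ is the sum of labels of all paths from $w$ to the toor. Merging $v,v'\in V_j$: set $V^*=(V\setminus\{v,v'\})\cup\{v^*\}$ with $v^*\in V^*_j$; keep every edge $(w,w')$ of $E$ with $w,w'\notin\{v,v'\}$ with the same label; for every $w\in V_{j-1}$ put $L^*(w,v^* )=L(w,v)+L(w,v')$; for every $w\in V_{j+1}$ put $L^*(v^*,w)=\tfrac12\big(L(v,w)+L(v',w)\big)$ (edges with label $0$ are regarded as absent). *)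

(* Defs.v *)
From mathcomp Require Import all_boot all_order all_algebra.
Set Implicit Arguments. Unset Strict Implicit. Unset Printing Implicit Defensive.
Import Order.TTheory GRing.Theory Num.Theory.
Local Open Scope ring_scope.

Section Trellis.
Variable Sigma : finType.

(* Elements of Q[Sigma^+] are represented by their coefficient functions on
   words (seq Sigma); the coefficient of the empty word is irrelevant (always 0
   for everything built here). *)
Definition ser := seq Sigma -> rat.

Definition szero : ser := fun _ => 0.
Definition sadd (a b : ser) : ser := fun w => a w + b w.
Definition smul (a b : ser) : ser :=
  fun w => \sum_(1 <= i < size w) a (take i w) * b (drop i w).

Definition emb (c : Sigma -> rat) : ser :=
  fun w => if w is [:: x] then c x else 0.

Variable V : finType.

(* A trellis on an ambient finite type V: vertex set tV, layer map, root,
   toor and tr_edge labels (label 0 = no tr_edge). *)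
Record trellis := Trellis {
  tV : {set V};
  lay : V -> nat;
  troot : V;
  ttoor : V;
  tlab : V -> V -> Sigma -> rat }.

Definition tr_edge (T : trellis) (x y : V) : bool := [exists s, tlab T x y s != 0].

Definition is_trellis (n : nat) (T : trellis) : Prop :=
  [/\ troot T \in tV T, ttoor T \in tV T, lay T (troot T) = 0%N,
      lay T (ttoor T) = n &
   [/\ forall x, x \in tV T -> (lay T x <= n)%N,
       forall x, x \in tV T -> lay T x = 0%N -> x = troot T,
       forall x, x \in tV T -> lay T x = n -> x = ttoor T &
       forall x y, tr_edge T x y ->
         [/\ x \in tV T, y \in tV T & lay T y = (lay T x).+1]]].

Fixpoint plab (L : V -> V -> Sigma -> rat) (u : V) (s : seq V) : ser :=
  match s with
  | [::] => szero
  | [:: w] => emb (L u w)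
  | w :: s' => smul (emb (L u w)) (plab L w s')
  end.

Definition is_path (T : trellis) (u : V) (s : seq V) : bool :=
  all (fun x => x \in tV T) (u :: s) && path (tr_edge T) u s.

(* sum of the labels of all paths from u to w with k >= 1 edges *)
Definition psum (T : trellis) (k : nat) (u w : V) : ser :=
  fun x => \sum_(t : (k.-1).-tuple V | is_path T u (rcons t w))
             plab (tlab T) u (rcons t w) x.

Definition tr_past (T : trellis) (w : V) : ser := psum T (lay T w) (troot T) w.
Definition tr_future (n : nat) (T : trellis) (w : V) : ser :=
  psum T (n - lay T w) w (ttoor T).
Definition tr_code (n : nat) (T : trellis) : ser := psum T n (troot T) (ttoor T).

(* merging v and v': v' is removed, and v plays the role of the new vertex v* *)
Definition merge_lab (T : trellis) (v v' : V) : V -> V -> Sigma -> rat :=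
  fun x y s =>
    if (x == v') || (y == v') then 0
    else if x == v then 2^-1 * (tlab T v y s + tlab T v' y s)
    else if y == v then tlab T x v s + tlab T x v' s
    else tlab T x y s.

Definition tr_merge (T : trellis) (v v' : V) : trellis :=
  Trellis (tV T :\ v') (lay T) (troot T) (ttoor T) (merge_lab T v v').

End Trellis.

(* Main.v *)
Require Import Defs.
From mathcomp Require Import all_boot all_order all_algebra.
From mathcomp Require Import zify.
Set Implicit Arguments. Unset Strict Implicit. Unset Printing Implicit Defensive.
Import Order.TTheory GRing.Theory Num.Theory.
Local Open Scope ring_scope.

Section S.
Variable Sigma V : finType.
Notation ser := (ser Sigma).

Lemma smul_ext (a a' b b' : ser) : a =1 a' -> b =1 b' -> smul a b =1 smul a' b'.
Proof. by move=> Ha Hb w; rewrite /smul; apply: eq_bigr => i _; rewrite Ha Hb. Qed.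

Lemma smul0r (b : ser) : smul (@szero Sigma) b =1 @szero Sigma.
Proof. by move=> w; rewrite /smul big1 // => i _; rewrite /szero mul0r. Qed.

Lemma smulr0 (b : ser) : smul b (@szero Sigma) =1 @szero Sigma.
Proof. by move=> w; rewrite /smul big1 // => i _; rewrite /szero mulr0. Qed.

Lemma smul_suml (I : finType) (F : I -> ser) (b : ser) w :
  smul (fun s => \sum_i F i s) b w = \sum_i smul (F i) b w.
Proof.
rewrite /smul exchange_big /=; apply: eq_bigr => i _; by rewrite mulr_suml.
Qed.

Lemma smul_sumr (I : finType) (F : I -> ser) (b : ser) w :
  smul b (fun s => \sum_i F i s) w = \sum_i smul b (F i) w.
Proof.
rewrite /smul exchange_big /=; apply: eq_bigr => i _; by rewrite mulr_sumr.
Qed.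

Lemma smul_emb_nil c (A : ser) : smul (emb c) A [::] = 0.
Proof. by rewrite /smul big_geq. Qed.

Lemma smul_emb_cons c (A : ser) x w :
  smul (emb c) A (x :: w) = if w is [::] then 0 else c x * A w.
Proof.
rewrite /smul /=; case: w => [|y w]; first by rewrite big_geq.
rewrite big_ltn //= big_nat_cond big1 ?addr0 ?drop0 // => i /andP [/andP [Hi _] _].
by move: Hi; case: i => [|[|i]] //= _; rewrite mul0r.
Qed.

Lemma smul_embA c (A B : ser) : smul (emb c) (smul A B) =1 smul (smul (emb c) A) B.
Proof.
case=> [|x w]; first by rewrite /smul !big_geq.
rewrite smul_emb_cons.
case: w => [|y w]; first by rewrite /smul big_geq.
rewrite {1 2}/smul /= [RHS]big_ltn // smul_emb_cons /= mul0r add0r [RHS]big_add1 /= big_distrr /=. rewrite big_nat_cond [RHS]big_nat_cond; apply: eq_bigr => i /andP [/andP [Hi _] _].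
rewrite smul_emb_cons; case: i Hi => [|i] //= _.
by rewrite mulrA.
Qed.

Fixpoint R (L : V -> V -> Sigma -> rat) (k : nat) (u w : V) : ser :=
  match k with
  | 0 => emb (L u w)
  | k'.+1 => fun s => \sum_x smul (emb (L u x)) (R L k' x w) s
  end.

Lemma R_split L a b u w :
  R L (a + b).+1 u w =1 fun s => \sum_x smul (R L a u x) (R L b x w) s.
Proof.
elim: a u => [|a IH] u s; first by rewrite add0n.
rewrite addSn /=.
under eq_bigr => x _ do rewrite (smul_ext (fun _ => erefl) (IH x)) smul_sumr.
rewrite exchange_big /=; apply: eq_bigr => y _.
rewrite smul_suml; apply: eq_bigr => x _; by rewrite smul_embA.
Qed.

Definition layered (lay : V -> nat) (L : V -> V -> Sigma -> rat) :=
  forall a b s, L a b s != 0 -> lay b = (lay a).+1.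

Lemma emb0 (c : Sigma -> rat) : (forall s, c s = 0) -> emb c =1 @szero Sigma.
Proof. by move=> H [|x [|y w]] //=. Qed.

Lemma emb_ext (c d : Sigma -> rat) : c =1 d -> emb c =1 emb d.
Proof. by move=> H [|x [|y w]] //=. Qed.

Lemma lay0 lay L a b : layered lay L -> lay b != (lay a).+1 -> forall s, L a b s = 0.
Proof.
move=> HL Hb s; apply/eqP; apply: contraNT Hb => /HL ->; exact: eqxx.
Qed.

Lemma R_lay lay L : layered lay L ->
  forall k u w, (lay w != lay u + k.+1)%N -> R L k u w =1 @szero Sigma.
Proof.
move=> HL; elim=> [|k IH] u w Hw /=.
  by apply: emb0; apply: (lay0 HL); rewrite addn1 in Hw.
move=> s /=; rewrite big1 // => x _.
have [Hx|Hx] := eqVneq (lay x) (lay u).+1.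
  rewrite (smul_ext (fun _ => erefl) (IH x w _)) ?smulr0 //.
  by rewrite Hx addSnnS.
by rewrite (smul_ext (emb0 (lay0 HL Hx)) (fun _ => erefl)) smul0r.
Qed.

Lemma R_agree lay L M : layered lay L -> layered lay M ->
  forall k u w, (forall a b, lay b = (lay a).+1 -> (lay u < lay a \/ a = u)%N ->
     (lay b < lay w \/ b = w)%N -> M a b =1 L a b) ->
  R M k u w =1 R L k u w.
Proof.
move=> HL HM; elim=> [|k IH] u w H /=.
  have [Hw|Hw] := eqVneq (lay w) (lay u).+1.
    by apply: emb_ext; apply: H => //; right.
  by move=> s; rewrite !emb0 // => z; first [apply: (lay0 HL Hw) | apply: (lay0 HM Hw)].
move=> s; apply: eq_bigr => x _.
have [Hx|Hx] := eqVneq (lay x) (lay u).+1; last first.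
  by rewrite (smul_ext (emb0 (lay0 HL Hx)) (fun _ => erefl)) smul0r
    (smul_ext (emb0 (lay0 HM Hx)) (fun _ => erefl)) smul0r.
have [Hxw|Hxw] := ltnP (lay x) (lay w).
  rewrite (smul_ext (fun _ => erefl) (IH x w _)); last first.
    move=> a b Hab Ha Hb; apply: H => //; left; case: Ha => [Ha|->]; last by rewrite Hx.
    by apply: (ltn_trans _ Ha); rewrite Hx.
  by apply: smul_ext => //; apply: emb_ext; apply: H => //; [right|left].
have Hne : (lay w != lay x + k.+1)%N.
  by apply/eqP => E; move: Hxw; rewrite E; lia.
by rewrite (smul_ext (fun _ => erefl) (R_lay HL Hne)) (smul_ext (fun _ => erefl) (R_lay HM Hne)) !smulr0.
Qed.

Lemma sum_tuple_cons k (F : k.+1.-tuple V -> rat) :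
  \sum_t F t = \sum_x \sum_(t : k.-tuple V) F [tuple of x :: t].
Proof.
rewrite pair_big /=.
rewrite (reindex (fun p : V * k.-tuple V => [tuple of p.1 :: p.2])) //=.
exists (fun t : k.+1.-tuple V => (thead t, [tuple of behead t])).
  by move=> [x t] _ /=; rewrite theadE; congr pair; apply: val_inj.
by move=> t _; rewrite [RHS]tuple_eta.
Qed.

Lemma plab_cons (L : V -> V -> Sigma -> rat) u x (t : seq V) w :
  plab L u (x :: rcons t w) = smul (emb (L u x)) (plab L x (rcons t w)).
Proof. by case: t. Qed.

Lemma tuple_R (L : V -> V -> Sigma -> rat) k u w s :
  \sum_(t : k.-tuple V) plab L u (rcons t w) s = R L k u w s.
Proof.
elim: k u s => [|k IH] u s.
  rewrite (eq_bigl (pred1 [tuple])) ?big_pred1_eq // => t.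
  by apply/esym/eqP; exact: tuple0.
rewrite sum_tuple_cons; apply: eq_bigr => x _.
under eq_bigr => t _ do rewrite (plab_cons L u x t w).
rewrite -smul_sumr; apply: smul_ext => // s'.
Qed.

Lemma plab_nonpath (T : trellis Sigma V) :
  (forall x y, tr_edge T x y -> y \in tV T) ->
  forall s u, u \in tV T -> ~~ is_path T u s -> plab (tlab T) u s =1 @szero Sigma.
Proof.
move=> Hcl; elim=> [|w s IH] u Hu Hp //.
have [He|He] := boolP (tr_edge T u w); last first.
  have H0 : forall z, tlab T u w z = 0.
    by move=> z; apply/eqP; move: He; rewrite /tr_edge negb_exists => /forallP /(_ z); rewrite negbK.
  case: s {IH Hp} => [|y s] /=; first exact: emb0.
  by move=> x; rewrite (smul_ext (emb0 H0) (fun _ => erefl)) smul0r.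
have Hw := Hcl _ _ He.
have Hp' : ~~ is_path T w s.
  apply: contra Hp; rewrite /is_path /= => /andP [/andP [-> ->] ->].
  by rewrite Hu He.
case: s IH Hp Hp' => [|y s] IH Hp Hp'; first by rewrite /is_path /= Hw in Hp'.
move=> x; rewrite [plab _ _ _]/= (smul_ext (fun _ => erefl) (IH w Hw Hp')).
by rewrite smulr0.
Qed.

Lemma psum_R (T : trellis Sigma V) k u w :
  (forall x y, tr_edge T x y -> y \in tV T) -> u \in tV T ->
  psum T k.+1 u w =1 R (tlab T) k u w.
Proof.
move=> Hcl Hu s; rewrite /psum /= -tuple_R big_mkcond /=; apply: eq_bigr => t _.
case: ifP => // /negbT Hp.
by rewrite (plab_nonpath Hcl Hu Hp).
Qed.

Lemma smulDl (A B C : ser) w :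
  smul (fun s => A s + B s) C w = smul A C w + smul B C w.
Proof. by rewrite /smul -big_split; apply: eq_bigr => i _; rewrite mulrDl. Qed.
Lemma smulDr (A B C : ser) w :
  smul C (fun s => A s + B s) w = smul C A w + smul C B w.
Proof. by rewrite /smul -big_split; apply: eq_bigr => i _; rewrite mulrDr. Qed.
Lemma smulZl c (A C : ser) w :
  smul (fun s => c * A s) C w = c * smul A C w.
Proof. by rewrite /smul mulr_sumr; apply: eq_bigr => i _; rewrite mulrA. Qed.
Lemma smulZr c (A C : ser) w :
  smul C (fun s => c * A s) w = c * smul C A w.
Proof. by rewrite /smul mulr_sumr; apply: eq_bigr => i _; rewrite mulrCA. Qed.
Lemma emb_add (c d : Sigma -> rat) w :
  emb (fun z => c z + d z) w = emb c w + emb d w.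
Proof. by case: w => [|x [|y w]] //=; rewrite addr0. Qed.
Lemma emb_scale k (c : Sigma -> rat) w :
  emb (fun z => k * c z) w = k * emb c w.
Proof. by case: w => [|x [|y w]] //=; rewrite mulr0. Qed.

Section Merge.
Variables (T : trellis Sigma V) (v v' : V).
Hypotheses (HL : layered (lay T) (tlab T)) (Hvv : v != v') (Hlv : lay T v = lay T v').
Notation M := (merge_lab T v v').
Notation L := (tlab T).

Lemma Lvv' x z : lay T x = lay T v -> L x v z = 0 /\ L x v' z = 0.
Proof.
move=> Hx; split; apply: (lay0 HL); rewrite ?Hx -?Hlv; apply/eqP; lia.
Qed.

Lemma M_in y z : M y v z = L y v z + L y v' z.
Proof.
rewrite /merge_lab (negbTE Hvv) orbF.
have [->|Hy] := eqVneq y v'.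
  by have [-> ->] := @Lvv' v' z (esym Hlv); rewrite addr0.
have [->|_] := eqVneq y v; last by rewrite eqxx.
have [-> ->] := @Lvv' v z erefl; have [-> _] := @Lvv' v' z (esym Hlv).
by rewrite !addr0 mulr0.
Qed.

Lemma M_out y z : M v y z = 2^-1 * (L v y z + L v' y z).
Proof.
rewrite /merge_lab (negbTE Hvv) /= eqxx.
have [->|Hy] := eqVneq y v'; last by [].
have [_ ->] := @Lvv' v z erefl; have [_ ->] := @Lvv' v' z (esym Hlv).
by rewrite addr0 mulr0.
Qed.

Lemma M_v' y z : M v' y z = 0.
Proof. by rewrite /merge_lab eqxx. Qed.

Lemma M_other x y z : x != v -> x != v' -> y != v -> y != v' -> M x y z = L x y z.
Proof.
by move=> H1 H2 H3 H4; rewrite /merge_lab (negbTE H1) (negbTE H2) (negbTE H3) (negbTE H4).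
Qed.

Lemma M_layered : layered (lay T) M.
Proof.
move=> a b z.
have [->|Ha] := eqVneq a v'; first by rewrite M_v' eqxx.
have [->|Ha'] := eqVneq a v.
  rewrite M_out => Hz; apply/eqP; apply: contraNT Hz => Hb.
  have Hb' : lay T b != (lay T v').+1 by rewrite -Hlv.
  by rewrite (lay0 HL Hb) (lay0 HL Hb') addr0 mulr0.
have [->|Hb] := eqVneq b v.
  rewrite M_in => Hz; apply/eqP; apply: contraNT Hz => Hb.
  have Hb' : lay T v' != (lay T a).+1 by rewrite -Hlv.
  by rewrite (lay0 HL Hb) (lay0 HL Hb') addr0.
have [->|Hb'] := eqVneq b v'; first by rewrite /merge_lab eqxx orbT eqxx.
by rewrite M_other //; apply: HL.
Qed.
End Merge.
End S.

Lemma sum2 (I : finType) (F : I -> rat) (v v' : I) : v != v' ->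
  \sum_x F x = F v + F v' + \sum_(x | (x != v) && (x != v')) F x.
Proof.
move=> H; rewrite (bigD1 v) //= (bigD1 v') /=; last by rewrite eq_sym.
rewrite addrA; congr (_ + _); apply: eq_bigl => x; by rewrite andbC.
Qed.

From mathcomp Require Import lra.
Unset Implicit Arguments.

Theorem proposition1 (Sigma V : finType) (n j : nat) (T : trellis Sigma V)
    (v v' : V) :
  is_trellis n T ->
  v \in tV T -> v' \in tV T -> v != v' ->
  lay T v = j -> lay T v' = j -> (1 <= j <= n.-1)%N ->
  sadd (smul (tr_past T v) (tr_future n T v)) (smul (tr_past T v') (tr_future n T v'))
    =1 sadd (smul (tr_past T v) (tr_future n T v')) (smul (tr_past T v') (tr_future n T v)) ->
  tr_code n (tr_merge T v v') =1 tr_code n T.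
Proof.
move=> [Hr Ht Hlr Hlt [Hle Hl0 Hln He]] Hv Hv' Hvv Hlv Hlv' Hj Hmer s.
have HL : layered (lay T) (tlab T).
  move=> a b z Hz; have /He [_ _ ->] // : tr_edge T a b by apply/existsP; exists z.
have Hcl : forall x y, tr_edge T x y -> y \in tV T by move=> x y /He [].
have Hlvv : lay T v = lay T v' by rewrite Hlv Hlv'.
have HM := M_layered HL Hvv Hlvv.
have neqv : forall y, lay T y != j -> (y != v) && (y != v').
  by move=> y Hy; apply/andP; split; apply: contraNneq Hy => ->; rewrite ?Hlv ?Hlv'.
have Hcl' : forall x y, tr_edge (tr_merge T v v') x y -> y \in tV (tr_merge T v v').
  move=> x y /existsP [z Hz] /=; rewrite !inE.
  have [Ey|Hyv'] := eqVneq y v'; first by move: Hz; rewrite Ey /= /merge_lab eqxx orbT; move/eqP.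
  rewrite /=.
  have [->|Hyv] := eqVneq y v; first exact: Hv.
  have [Ex|Hxv] := eqVneq x v.
    move: Hz; rewrite /= Ex (M_out HL Hvv Hlvv) => Hz.
    have [Hz1|Hz1] := eqVneq (tlab T v y z) 0.
      rewrite Hz1 add0r in Hz; apply: (Hcl v'); apply/existsP; exists z.
      by apply: contraNneq Hz => ->; rewrite mulr0.
    by apply: (Hcl v); apply/existsP; exists z.
  have [Ex|Hxv'] := eqVneq x v'; first by move: Hz; rewrite /= Ex M_v'; move/eqP.
  by move: Hz; rewrite /= M_other // => Hz; apply: (Hcl x); apply/existsP; exists z.
have [a Ha] : exists a, j = a.+1 by case: j Hj {Hlv Hlv' neqv} => [|a] // _; exists a.
have [b Hn] : exists b, n = (a + b).+2.
  by exists (n - a.+2)%N; move: Hj; rewrite Ha; lia.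
have Hnb : (n - j = b.+1)%N by rewrite Hn Ha; lia.
have Hr' : troot T \in tV (tr_merge T v v').
  rewrite /= !inE Hr andbT; apply/eqP => E.
  by move: Hlr; rewrite E Hlv' Ha.
rewrite /tr_code Hn (psum_R _ _ Hcl' Hr') (psum_R _ _ Hcl Hr) !R_split.
have Hvv' : v' != v by rewrite eq_sym.
rewrite !(sum2 _ Hvv) /=.
have Mo : forall x y, (x != v) && (x != v') -> (y != v) && (y != v') ->
    merge_lab T v v' x y =1 tlab T x y.
  by move=> x y /andP [? ?] /andP [? ?] z; apply: M_other.
have AgP : forall k y, (k <= a)%N -> (k < a)%N \/ (y != v) && (y != v') ->
    R (merge_lab T v v') k (troot T) y =1 R (tlab T) k (troot T) y.
  move=> k y Hk Hy.
  have [Hly|Hly] := eqVneq (lay T y) (lay T (troot T) + k.+1)%N; last first.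
    by move=> z; rewrite (R_lay HL Hly) (R_lay HM Hly).
  apply: (R_agree HL HM) => a0 b0 Hab Ha0 Hb0; apply: Mo.
    have Hb0' : (lay T b0 <= lay T y)%N by case: Hb0 => [/ltnW|->].
    apply: neqv; move: Hly; rewrite Hlr; lia.
  case: Hb0 => [Hb0|->]; first by apply: neqv; lia.
  by case: Hy => // Hy; apply: neqv; lia.
have AgF : forall k y, (k <= b)%N -> (k < b)%N \/ (y != v) && (y != v') ->
    R (merge_lab T v v') k y (ttoor T) =1 R (tlab T) k y (ttoor T).
  move=> k y Hk Hy.
  have [Hly|Hly] := eqVneq (lay T (ttoor T)) (lay T y + k.+1)%N; last first.
    by move=> z; rewrite (R_lay HL Hly) (R_lay HM Hly).
  move: Hly; rewrite Hlt Hn => Hly.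
  apply: (R_agree HL HM) => a0 b0 Hab Ha0 Hb0.
  have Ha0' : (lay T y <= lay T a0)%N by case: Ha0 => [/ltnW|->].
  apply: Mo; last by apply: neqv; lia.
  case: Ha0 => [Ha0|->]; first by apply: neqv; lia.
  by case: Hy => // Hy; apply: neqv; lia.
have Rest : \sum_(x | (x != v) && (x != v'))
     smul (R (merge_lab T v v') a (troot T) x) (R (merge_lab T v v') b x (ttoor T)) s =
   \sum_(x | (x != v) && (x != v'))
     smul (R (tlab T) a (troot T) x) (R (tlab T) b x (ttoor T)) s.
  by apply: eq_bigr => x Hx; apply: smul_ext; [apply: AgP|apply: AgF] => //; right.
have Zemb : forall y, emb (merge_lab T v v' v' y) =1 @szero Sigma.
  by move=> y; apply: emb0 => t; rewrite /merge_lab eqxx.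
have Zv' : smul (R (merge_lab T v v') a (troot T) v') (R (merge_lab T v v') b v' (ttoor T)) s = 0.
  rewrite (smul_ext (fun _ => erefl) (_ : _ =1 @szero Sigma)) ?smulr0 //.
  case: (b) => [|b'] z /=; first by rewrite Zemb.
  by rewrite big1 // => y _; rewrite (smul_ext (Zemb y) (fun _ => erefl)) smul0r.
rewrite Rest Zv' addr0; congr (_ + _).
have Pv : R (merge_lab T v v') a (troot T) v =1
    fun z => R (tlab T) a (troot T) v z + R (tlab T) a (troot T) v' z.
  have Hin := M_in HL Hvv Hlvv.
  case Ea : a => [|a'] z.
    by rewrite /= (emb_ext (Hin (troot T))) emb_add.
  rewrite -(addn0 a') !R_split -big_split /=; apply: eq_bigr => y _.
  have h1 : (a' <= a)%N by rewrite Ea.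
  have h2 : (a' < a)%N \/ (y != v) && (y != v') by left; rewrite Ea.
  rewrite ?addn0 (smul_ext (AgP a' y h1 h2) (emb_ext (Hin y))).
  by rewrite (smul_ext (fun _ => erefl) (emb_add _ _)) smulDr.
have Fv : R (merge_lab T v v') b v (ttoor T) =1
    fun z => 2^-1 * (R (tlab T) b v (ttoor T) z + R (tlab T) b v' (ttoor T) z).
  have Hout := M_out HL Hvv Hlvv.
  case Eb : b => [|b'] z /=.
    by rewrite (emb_ext (Hout _)) emb_scale emb_add.
  rewrite -big_split mulr_sumr; apply: eq_bigr => y _.
  have h1 : (b' <= b)%N by rewrite Eb.
  have h2 : (b' < b)%N \/ (y != v) && (y != v') by left; rewrite Eb.
  rewrite (smul_ext (emb_ext (Hout y)) (AgF b' y h1 h2)).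
  rewrite (smul_ext (emb_scale _ _) (fun _ => erefl)) smulZl.
  by rewrite (smul_ext (emb_add _ _) (fun _ => erefl)) smulDl.
rewrite (smul_ext Pv Fv) smulZr smulDl !smulDr.
have P1 := psum_R a v Hcl Hr; have P2 := psum_R a v' Hcl Hr.
have F1 := psum_R b (ttoor T) Hcl Hv; have F2 := psum_R b (ttoor T) Hcl Hv'.
move: (Hmer s); rewrite /sadd /tr_past /tr_future Hlv Hlv' Hnb Ha.
rewrite (smul_ext P1 F1) (smul_ext P2 F2) (smul_ext P1 F2) (smul_ext P2 F1) => H.
lra.
Qed.
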